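(* Let $F\in\mathcal{B}((\mathbb{C}^2)^{\otimes d})$ with $\|F\|\leq 1$, and fix $s_0\leq n-2$. Then \[ \big|\langle\psi_{s}|(F\otimes I^{\otimes n-d})|\psi_{s}\rangle-\langle\psi_{r}|(F\otimes I^{\otimes n-d})|\psi_{r}\rangle\big|=O\big(\sqrt{d s_0/n}\big)\qquad\text{for all } r,s\leq s_0, \] where the $O$-notation refers to $n\to\infty$.
   Context: On $n$ qubits, let $\omega=e^{2\pi i/n}$, $\sigma_m^-=|0\rangle\langle1|$ on qubit $m$, $S_-=\sum_{m=1}^n\sigma_m^-$, $|\Psi\rangle=\overline{\omega}\sum_{m=1}^n\omega^m\sigma_m^-|1\rangle^{\otimes n}$, and for $s=0,\dots,n-2$, $|\psi_s\rangle=S_-^s|\Psi\rangle/\|S_-^s|\Psi\rangle\|$. $F\otimes I^{\otimes(n-d)}$ acts as $F$ on the first $d$ qubits. *)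

(* Defs.v *)
From HB Require Import structures.
From mathcomp Require Import all_boot all_order all_algebra.
From mathcomp Require Import all_classical all_reals all_analysis.
From mathcomp Require Import complex.
Set Implicit Arguments. Unset Strict Implicit. Unset Printing Implicit Defensive.
Import Order.TTheory GRing.Theory Num.Theory.
Local Open Scope ring_scope.

(* Qubit basis label true = |1>, false = |0>.
   n-qubit basis states are bit strings {ffun 'I_n -> bool}; qubit m
   (1-based in the paper) is index m-1 : 'I_n. *)

Section QDefs.
Variable R : realType.
Local Notation C := (R[i]).

Definition cabs2 (z : C) : R := complex.Re z ^+ 2 + complex.Im z ^+ 2.
Definition cmod (z : C) : R := Num.sqrt (cabs2 z).
Definition cconj (z : C) : C := Complex (complex.Re z) (- complex.Im z).

Definition bits (n : nat) := {ffun 'I_n -> bool}.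
Definition qvec (n : nat) := bits n -> C.
Definition qop (n : nat) := bits n -> bits n -> C.   (* matrix entries <x|A|y> *)

Definition omega (n : nat) : C :=
  Complex (cos (2 * pi / n%:R)) (sin (2 * pi / n%:R)).

Definition setbit n (x : bits n) (m : 'I_n) (b : bool) : bits n :=
  [ffun j => if j == m then b else x j].

(* sigma_m^- = |0><1| on qubit m *)
Definition sigma_minus n (m : 'I_n) (v : qvec n) : qvec n :=
  fun y => if y m then 0 else v (setbit y m true).

Definition S_minus n (v : qvec n) : qvec n :=
  fun y => \sum_(m < n) sigma_minus m v y.

Definition all_ones n : qvec n := fun y => if y == [ffun => true] then 1 else 0.

(* |Psi> = conj(omega) sum_{m=1}^n omega^m sigma_m^- |1...1>,
   with paper's qubit m = index m-1 *)
Definition Psi n : qvec n :=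
  fun y => cconj (omega n) *
           \sum_(m < n) omega n ^+ (m.+1) * sigma_minus m (@all_ones n) y.

Definition vnorm n (v : qvec n) : R := Num.sqrt (\sum_(y : bits n) cabs2 (v y)).

Definition vscale n (a : C) (v : qvec n) : qvec n := fun y => a * v y.

Definition psi n (s : nat) : qvec n :=
  let w := iter s (@S_minus n) (@Psi n) in
  vscale (Complex (vnorm w)^-1 0) w.

Definition apply_op n (A : qop n) (v : qvec n) : qvec n :=
  fun x => \sum_(y : bits n) A x y * v y.

Definition expect n (A : qop n) (v : qvec n) : C :=
  \sum_(x : bits n) \sum_(y : bits n) cconj (v x) * A x y * v y.

(* ||F|| <= 1 for the operator norm: ||F v|| <= ||v|| for all v *)
Definition op_norm_le1 d (F : qop d) : Prop :=
  forall v : qvec d, vnorm (apply_op F v) <= vnorm v.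

Definition restr n d (x : bits n) : bits d :=
  [ffun i : 'I_d => if insub (val i) is Some j then x (j : 'I_n) else false].

(* F (x) I^{(x)(n-d)}: F on the first d qubits, identity on qubits d..n-1 *)
Definition tensor_id n d (F : qop d) : qop n :=
  fun x y => if [forall j : 'I_n, (d <= j)%N ==> (x j == y j)]
             then F (restr d x) (restr d y) else 0.

End QDefs.

(* Main.v *)
Require Import Defs.
From HB Require Import structures.
From mathcomp Require Import all_boot all_order all_algebra.
From mathcomp Require Import all_classical all_reals all_analysis.
From mathcomp Require Import complex.
From mathcomp Require Import ring lra zify.
Set Implicit Arguments. Unset Strict Implicit. Unset Printing Implicit Defensive.
Import Order.TTheory GRing.Theory Num.Theory.
Local Open Scope ring_scope.
Local Open Scope complex_scope.
Section Basic.
Variable R : realType.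
Local Notation C := (R[i]).

Lemma cabs2M (a b : C) : cabs2 (a*b) = cabs2 a * cabs2 b.
Proof. case: a => a1 a2; case: b => b1 b2. rewrite /cabs2 /=. ring. Qed.
Lemma cabs2_ge0 (a : C) : 0 <= cabs2 a.
Proof. by rewrite /cabs2 addr_ge0 // sqr_ge0. Qed.
Lemma cabs2_eq0 (a : C) : (cabs2 a == 0) = (a == 0).
Proof. case: a => a1 a2; rewrite /cabs2 /= paddr_eq0 ?sqr_ge0 // !sqrf_eq0 eq_complex /=. by []. Qed.
Lemma cabs20 : cabs2 (0 : C) = 0.
Proof. by rewrite /cabs2 /= expr0n /= addr0. Qed.
Lemma cconjE (a : C) : cconj a = conjc a.
Proof. by case: a. Qed.
Lemma cmodE (a : C) : cmod a = Normc.normc a.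
Proof. by case: a. Qed.
Lemma cmodD (a b : C) : cmod (a + b) <= cmod a + cmod b.
Proof. rewrite !cmodE; exact: le_normcD. Qed.
Lemma cmodM (a b : C) : cmod (a * b) = cmod a * cmod b.
Proof. rewrite !cmodE; exact: Normc.normcM. Qed.
Lemma cmodN (a : C) : cmod (- a) = cmod a.
Proof. rewrite !cmodE; exact: normcN. Qed.
Lemma cmod_ge0 (a : C) : 0 <= cmod a.
Proof. exact: sqrtr_ge0. Qed.
Lemma cmodB (a b : C) : cmod (a - b) <= cmod a + cmod b.
Proof. by rewrite -(cmodN b) cmodD. Qed.
Lemma cmod_sqr (a : C) : cmod a ^+ 2 = cabs2 a.
Proof. by rewrite /cmod sqr_sqrtr // cabs2_ge0. Qed.
Lemma cabs2_conj (a : C) : cabs2 (cconj a) = cabs2 a.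
Proof. case: a => a1 a2; rewrite /cabs2 /=; ring. Qed.
Lemma cmod_conj (a : C) : cmod (cconj a) = cmod a.
Proof. by rewrite /cmod cabs2_conj. Qed.
Lemma cmod_sum (I : finType) (P : pred I) (f : I -> C) :
  cmod (\sum_(i | P i) f i) <= \sum_(i | P i) cmod (f i).
Proof.
elim/big_ind2: _ => //.
  by rewrite /cmod cabs20 sqrtr0.
move=> x1 x2 y1 y2 h1 h2; apply: le_trans (cmodD _ _) _; exact: lerD.
Qed.
Lemma cmod_real (r : R) : cmod (r%:C) = `|r|.
Proof. by rewrite /cmod /cabs2 /= expr0n /= addr0 sqrtr_sqr. Qed.
Lemma cabs2_real (r : R) : cabs2 (r%:C) = r ^+ 2.
Proof. by rewrite /cabs2 /= expr0n /= addr0. Qed.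
Lemma cconj_mul_self (a : C) : cconj a * a = (cabs2 a)%:C.
Proof. case: a => a1 a2; rewrite /cabs2 /=; apply/eqP; rewrite eq_complex /=; apply/andP; split; apply/eqP; ring. Qed.

Lemma realCS (I : finType) (f g : I -> R) :
  (\sum_i f i * g i) ^+ 2 <= (\sum_i f i ^+ 2) * (\sum_i g i ^+ 2).
Proof.
have H : 0 <= \sum_i \sum_j (f i * g j - f j * g i) ^+ 2.
  by apply: sumr_ge0 => i _; apply: sumr_ge0 => j _; exact: sqr_ge0.
have E : \sum_i \sum_j (f i * g j - f j * g i) ^+ 2 =
   ((\sum_i f i ^+ 2) * (\sum_i g i ^+ 2)) *+ 2 - ((\sum_i f i * g i) ^+ 2) *+ 2.
  have E1 : forall i j, (f i * g j - f j * g i) ^+ 2 =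
     f i ^+ 2 * g j ^+ 2 + f j ^+ 2 * g i ^+ 2 - (f i * g i) * (f j * g j) *+ 2.
    by move=> i j; ring.
  under eq_bigr do under eq_bigr do rewrite E1.
  under eq_bigr do rewrite sumrB big_split /=.
  rewrite sumrB big_split /=.
  have Ea : \sum_i \sum_j f i ^+ 2 * g j ^+ 2 = (\sum_i f i ^+ 2) * (\sum_i g i ^+ 2).
    by rewrite mulr_suml; apply: eq_bigr => i _; rewrite mulr_sumr.
  have Eb : \sum_i \sum_j f j ^+ 2 * g i ^+ 2 = (\sum_i f i ^+ 2) * (\sum_i g i ^+ 2).
    by rewrite exchange_big /= Ea.
  have Ec : \sum_i \sum_j (f i * g i) * (f j * g j) *+ 2 = ((\sum_i f i * g i) ^+ 2) *+ 2.
    rewrite expr2 -mulr_natr mulr_suml mulr_suml; apply: eq_bigr => i _.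
    rewrite mulr_sumr mulr_suml; apply: eq_bigr => j _; by rewrite mulr_natr.
  rewrite Ea Eb Ec; ring.
rewrite E subr_ge0 in H.
by rewrite -(ler_pMn2r (n := 2)).
Qed.

Lemma realCS_sqrt (I : finType) (f g : I -> R) :
  \sum_i f i * g i <= Num.sqrt (\sum_i f i ^+ 2) * Num.sqrt (\sum_i g i ^+ 2).
Proof.
rewrite -sqrtrM; last by apply: sumr_ge0 => i _; exact: sqr_ge0.
apply: le_trans (ler_norm _) _.
by rewrite -sqrtr_sqr ler_sqrt ?realCS // mulr_ge0 // sumr_ge0 // => i _; exact: sqr_ge0.
Qed.

Definition nsq n (v : qvec R n) : R := \sum_y cabs2 (v y).
Definition inner n (u w : qvec R n) : C := \sum_y cconj (u y) * w y.

Lemma nsq_ge0 n (v : qvec R n) : 0 <= nsq v.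
Proof. by apply: sumr_ge0 => y _; exact: cabs2_ge0. Qed.

Lemma vnorm_ge0 n (v : qvec R n) : 0 <= vnorm v.
Proof. exact: sqrtr_ge0. Qed.

Lemma vnorm_sqr n (v : qvec R n) : vnorm v ^+ 2 = nsq v.
Proof. by rewrite /vnorm sqr_sqrtr // nsq_ge0. Qed.

Lemma complexCS n (u w : qvec R n) : cmod (inner u w) <= vnorm u * vnorm w.
Proof.
rewrite /inner; apply: le_trans (cmod_sum _ _) _.
under eq_bigr do rewrite cmodM cmod_conj.
apply: le_trans (realCS_sqrt _ _) _.
by under eq_bigr do rewrite cmod_sqr; under [X in _ * Num.sqrt X]eq_bigr do rewrite cmod_sqr.
Qed.

Lemma entry_le n (w : qvec R n) y : cmod (w y) <= vnorm w.
Proof.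
rewrite /cmod /vnorm ler_sqrt ?nsq_ge0 //.
rewrite (bigD1 y) //= lerDl; apply: sumr_ge0 => z _; exact: cabs2_ge0.
Qed.

End Basic.
Section Block.
Variable R : realType.
Local Notation C := (R[i]).
Variable d : nat.
Variable F : qop R d.
Hypothesis hF : op_norm_le1 F.

Definition ones : bits d := [ffun => true].
Definition zo (v : qvec R d) : qvec R d := fun y => if y == ones then 0 else v y.
Definition ee : qvec R d := fun y => if y == ones then 1 else 0.

Lemma expect_inner n (A : qop R n) v : expect A v = inner v (apply_op A v).
Proof.
rewrite /expect /inner /apply_op; apply: eq_bigr => x _.
rewrite mulr_sumr; apply: eq_bigr => y _; by rewrite mulrA.
Qed.

Lemma apply_split v x : apply_op F v x = v ones * F x ones + apply_op F (zo v) x.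
Proof.
rewrite /apply_op (bigD1 ones) //= [in RHS](bigD1 ones) //= /zo eqxx mulr0 add0r mulrC; congr (_ + _).
by apply: eq_bigr => y /negbTE ->.
Qed.

Lemma inner_split v w : inner v w = cconj (v ones) * w ones + inner (zo v) w.
Proof.
rewrite /inner (bigD1 ones) //= [in RHS](bigD1 ones) //= /zo eqxx.
have -> : cconj (0 : C) = 0 by apply/eqP; rewrite eq_complex /= oppr0 !eqxx.
rewrite mul0r add0r; congr (_ + _).
by apply: eq_bigr => y /negbTE ->.
Qed.

Lemma nsq_split v : nsq v = cabs2 (v ones) + nsq (zo v).
Proof.
rewrite /nsq (bigD1 ones) //= [in RHS](bigD1 ones) //= /zo eqxx cabs20 add0r.
congr (_ + _); by apply: eq_bigr => y /negbTE ->.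
Qed.

Lemma nsq_zo_le v : nsq (zo v) <= nsq v.
Proof. by rewrite (nsq_split v) lerDr cabs2_ge0. Qed.

Lemma vnorm_zo_le v : vnorm (zo v) <= vnorm v.
Proof. by rewrite /vnorm ler_sqrt ?nsq_zo_le ?nsq_ge0. Qed.

Lemma apply_e x : apply_op F ee x = F x ones.
Proof.
rewrite /apply_op (bigD1 ones) //= /ee eqxx mulr1 big1 ?addr0 //.
by move=> y /negbTE ->; rewrite mulr0.
Qed.

Lemma vnorm_e : vnorm ee = 1.
Proof.
rewrite /vnorm (bigD1 ones) //= /ee eqxx big1 ?addr0.
  by rewrite /cabs2 /= expr1n expr0n /= addr0 sqrtr1.
by move=> y /negbTE ->; rewrite cabs20.
Qed.

Lemma F11_le : cmod (F ones ones) <= 1.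
Proof. by rewrite -apply_e -vnorm_e; apply: le_trans (entry_le _ _) (hF ee). Qed.

Lemma block_bound v :
  cmod (expect F v - F ones ones * (nsq v)%:C) <= 3%:R * vnorm v * vnorm (zo v).
Proof.
have E : expect F v - F ones ones * (nsq v)%:C =
   cconj (v ones) * apply_op F (zo v) ones + inner (zo v) (apply_op F v)
   - F ones ones * (nsq (zo v))%:C.
  rewrite expect_inner inner_split [apply_op F v ones]apply_split nsq_split rmorphD /=.
  rewrite mulrDr mulrA cconj_mul_self; ring.
rewrite E.
set a := vnorm v; set b := vnorm (zo v).
have a0 : 0 <= a by exact: vnorm_ge0.
have b0 : 0 <= b by exact: vnorm_ge0.
have ba : b <= a by exact: vnorm_zo_le.
have h1 : cmod (cconj (v ones) * apply_op F (zo v) ones) <= a * b.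
  rewrite cmodM cmod_conj; apply: ler_pM; rewrite ?cmod_ge0 //; first exact: entry_le.
  apply: le_trans (entry_le _ _) _. exact: (hF (zo v)).
have h2 : cmod (inner (zo v) (apply_op F v)) <= a * b.
  apply: le_trans (complexCS _ _) _; rewrite mulrC; apply: ler_pM; rewrite ?vnorm_ge0 //; exact: (hF v).
have h3 : cmod (F ones ones * (nsq (zo v))%:C) <= a * b.
  rewrite cmodM cmod_real ger0_norm ?nsq_ge0 // -vnorm_sqr -/b.
  have : cmod (F ones ones) * b ^+ 2 <= 1 * b ^+ 2 by apply: ler_wpM2r; rewrite ?sqr_ge0 ?F11_le.
  move=> h; apply: le_trans h _; rewrite mul1r expr2 mulrC; apply: ler_wpM2r => //.
apply: le_trans (cmodB _ _) _.
have : cmod (cconj (v ones) * apply_op F (zo v) ones + inner (zo v) (apply_op F v)) <= a * b + a * b.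
  by apply: le_trans (cmodD _ _) _; apply: lerD.
move=> h4; apply: le_trans (lerD h4 h3) _.
rewrite -!mulrA; lra.
Qed.

End Block.
Section Decomp.
Variable R : realType.
Local Notation C := (R[i]).
Variables n d : nat.
Hypothesis hd : (d <= n)%N.

Definition dropb (x : bits n) : bits (n - d) :=
  [ffun k : 'I_(n-d) => if insub (d + val k)%N is Some j then x (j : 'I_n) else false].
Definition joinb (a : bits d) (b : bits (n-d)) : bits n :=
  [ffun j : 'I_n => if insub (val j) is Some i then a (i : 'I_d)
     else if insub (val j - d)%N is Some k then b (k : 'I_(n-d)) else false].

Lemma restr_join a b : restr d (joinb a b) = a.
Proof.
apply/ffunP => i; rewrite /restr !ffunE.
case: insubP => [j _ vj|]; last by rewrite (leq_trans (ltn_ord i) hd).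
rewrite ffunE; case: insubP => [i' _ vi'|]; last by rewrite vj ltn_ord.
by congr (a _); apply: val_inj; rewrite /= vi' vj.
Qed.

Lemma drop_join a b : dropb (joinb a b) = b.
Proof.
apply/ffunP => k; rewrite /dropb !ffunE.
case: insubP => [j _ vj|]; last first.
  by have := ltn_ord k; rewrite ltn_subRL => ->.
rewrite ffunE; case: insubP => [i' _ vi'|_].
  by move: (ltn_ord i'); rewrite vi' vj ltnNge leq_addr.
case: insubP => [k' _ vk'|]; last by rewrite vj addKn ltn_ord.
by congr (b _); apply: val_inj; rewrite /= vk' vj addKn.
Qed.

Lemma join_restr_drop x : joinb (restr d x) (dropb x) = x.
Proof.
apply/ffunP => j; rewrite !ffunE.
case: insubP => [i _ vi|hj].
  rewrite /restr ffunE; case: insubP => [j' _ vj'|]; last by rewrite vi ltn_ord.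
  by congr (x _); apply: val_inj; rewrite /= vj' vi.
have hj' : (d <= j)%N by rewrite leqNgt; apply/negP => h; move: hj; rewrite h.
case: insubP => [k _ vk|]; last by move/negP; case; move: hj' (ltn_ord j); case: j {hj} => /= j; lia.
rewrite /dropb ffunE; case: insubP => [j' _ vj'|]; last by rewrite vk subnKC // ltn_ord.
by congr (x _); apply: val_inj; rewrite /= vj' vk subnKC.
Qed.

Lemma sum_split (V : nmodType) (f : bits n -> V) :
  \sum_(x : bits n) f x = \sum_(b : bits (n-d)) \sum_(a : bits d) f (joinb a b).
Proof.
rewrite pair_bigA /= (reindex (fun p : bits (n-d) * bits d => joinb p.2 p.1)) //=.
apply: onW_bij; exists (fun x => (dropb x, restr d x)) => [[b a]|x] /=.
  by rewrite restr_join drop_join.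
by rewrite join_restr_drop.
Qed.

Lemma fa_drop (x y : bits n) :
  [forall j : 'I_n, (d <= j)%N ==> (x j == y j)] = (dropb x == dropb y).
Proof.
apply/forallP/eqP => [h|h].
  apply/ffunP => k; rewrite !ffunE; case: insubP => [j _ vj|//].
  by apply/eqP; move: (h j); rewrite vj leq_addr.
move=> j; apply/implyP => hj.
have hk : (j - d < n - d)%N by rewrite ltn_sub2r // (leq_ltn_trans hj).
move/ffunP: h => /(_ (Ordinal hk)); rewrite !ffunE /=.
case: insubP => [j' _ vj'|]; last by rewrite subnKC // ltn_ord.
have -> : j' = j by apply: val_inj; rewrite vj' /= subnKC.
by move=> ->.
Qed.

Lemma tensor_join (F : qop R d) a b a' b' :
  @tensor_id R n d F (joinb a b) (joinb a' b') = if b == b' then F a a' else 0.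
Proof.
by rewrite /tensor_id fa_drop !drop_join !restr_join.
Qed.

Definition blk (psi : qvec R n) (b : bits (n-d)) : qvec R d := fun a => psi (joinb a b).

Lemma expect_split (F : qop R d) psi :
  expect (@tensor_id R n d F) psi = \sum_b expect F (blk psi b).
Proof.
have E : forall b a, \sum_(y : bits n) cconj (psi (joinb a b)) * @tensor_id R n d F (joinb a b) y * psi y
   = \sum_(a' : bits d) cconj (psi (joinb a b)) * F a a' * psi (joinb a' b).
  move=> b a; rewrite sum_split (bigD1 b) //= [X in _ + X]big1 ?addr0.
    by under eq_bigr do rewrite tensor_join eqxx.
  move=> b' hb; apply: big1 => a' _; rewrite tensor_join eq_sym (negbTE hb).
  by rewrite mulr0 mul0r.
rewrite /expect sum_split.
under eq_bigr do under eq_bigr do rewrite E.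
by [].
Qed.

Lemma nsq_split2 psi : nsq psi = \sum_b nsq (blk psi b).
Proof. by rewrite /nsq sum_split. Qed.

Definition pb (psi : qvec R n) : R :=
  \sum_x (if restr d x == ones d then 0 else cabs2 (psi x)).

Lemma pb_ge0 psi : 0 <= pb psi.
Proof. apply: sumr_ge0 => x _; case: ifP => _ //; exact: cabs2_ge0. Qed.

Lemma pb_split psi : pb psi = \sum_b nsq (zo (blk psi b)).
Proof.
rewrite /pb sum_split; apply: eq_bigr => b _; apply: eq_bigr => a _.
by rewrite restr_join /zo; case: ifP => _ //; rewrite cabs20.
Qed.

Lemma partA (F : qop R d) psi : op_norm_le1 F ->
  cmod (expect (@tensor_id R n d F) psi - F (ones d) (ones d) * (nsq psi)%:C)
    <= 3%:R * Num.sqrt (nsq psi) * Num.sqrt (pb psi).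
Proof.
move=> hF.
rewrite expect_split nsq_split2 pb_split rmorph_sum mulr_sumr -sumrB.
apply: le_trans (cmod_sum _ _) _.
apply: le_trans (ler_sum _ (fun b _ => block_bound hF (blk psi b))) _.
under eq_bigr do rewrite -mulrA.
rewrite -mulr_sumr -mulrA ler_wpM2l //.
apply: le_trans (realCS_sqrt (fun b => vnorm (blk psi b)) (fun b => vnorm (zo (blk psi b)))) _.
have e1 : \sum_b vnorm (blk psi b) ^+ 2 = \sum_b nsq (blk psi b).
  by apply: eq_bigr => b _; exact: vnorm_sqr.
have e2 : \sum_b vnorm (zo (blk psi b)) ^+ 2 = \sum_b nsq (zo (blk psi b)).
  by apply: eq_bigr => b _; exact: vnorm_sqr.
by rewrite e1 e2.
Qed.

End Decomp.
Section Omega.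
Variable R : realType.
Local Notation C := (R[i]).
Variable n : nat.
Hypothesis hn : (1 < n)%N.

Local Notation w := (omega R n).
Definition theta : R := 2 * pi / n%:R.

Lemma n_gt0R : 0 < n%:R :> R.
Proof. by rewrite ltr0n (ltn_trans _ hn). Qed.

Lemma omega_pow k : w ^+ k = Complex (cos (theta * k%:R)) (sin (theta * k%:R)).
Proof.
elim: k => [|k IH].
  by rewrite expr0 mulr0 cos0 sin0.
rewrite exprS IH /omega -/theta; apply/eqP; rewrite eq_complex /=.
rewrite -addn1 natrD mulrDr mulr1 cosD sinD; apply/andP; split; apply/eqP; ring.
Qed.

Lemma cabs2_omega_pow k : cabs2 (w ^+ k) = 1.
Proof. by rewrite omega_pow /cabs2 /= cos2Dsin2. Qed.

Lemma cabs2_omega : cabs2 w = 1.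
Proof. by rewrite -(expr1 w) cabs2_omega_pow. Qed.

Lemma omega_n : w ^+ n = 1.
Proof.
rewrite omega_pow.
have -> : theta * n%:R = pi *+ 2.
  rewrite /theta -mulr_natr; field; by rewrite lt0r_neq0 // n_gt0R.
by rewrite cos2pi sin2pi.
Qed.

Lemma omega_pow_neq1 k : (0 < k < n)%N -> w ^+ k != 1.
Proof.
move=> /andP[k0 kn]; rewrite omega_pow; apply/negP => /eqP [hc _].
set x := theta * k%:R in hc.
have hx : 0 < x / 2 < pi.
  have npos := n_gt0R; have pipos := @pi_gt0 R.
  have kpos : 0 < k%:R :> R by rewrite ltr0n.
  have kn' : k%:R < n%:R :> R by rewrite ltr_nat.
  rewrite /x /theta; apply/andP; split.
    by rewrite !mulr_gt0 // ?invr_gt0.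
  have -> : 2 * pi / n%:R * k%:R / 2 = pi * (k%:R / n%:R) :> R.
    field; by rewrite lt0r_neq0.
  rewrite -[X in _ < X]mulr1 ltr_pM2l // ltr_pdivrMr // mul1r //.
have := sin_gt0_pi hx => hs.
have : cos x = 1 - (sin (x / 2)) ^+ 2 *+ 2.
  have cd : forall y : R, cos (y *+ 2) = 1 - sin y ^+ 2 *+ 2.
    by move=> y; rewrite cos_mulr2n cos2sin2; ring.
  by rewrite -cd; congr cos; rewrite -mulr_natr; field.
rewrite hc => /eqP; rewrite -subr_eq0 opprD addrA subrr add0r opprK.
by rewrite -mulr_natr mulf_eq0 pnatr_eq0 orbF sqrf_eq0 (gt_eqF hs).
Qed.

Lemma omega_neq0 : w != 0.
Proof. by rewrite -cabs2_eq0 cabs2_omega oner_neq0. Qed.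

Lemma geom_neq0 k : (0 < k < n)%N -> \sum_(i < k) w ^+ i != 0.
Proof.
move=> hk; apply/negP => /eqP h.
have := subrX1 w k; rewrite h mulr0 => /eqP; rewrite subr_eq0.
by apply/negP; exact: omega_pow_neq1.
Qed.

Lemma omega_pow_mod k : w ^+ (k %% n) = w ^+ k.
Proof. exact: expr_mod omega_n. Qed.

End Omega.
Section Formula.
Variable R : realType.
Local Notation C := (R[i]).
Variable n : nat.
Local Notation w := (omega R n).

Definition zeros (y : bits n) : nat := (\sum_(i < n) (~~ y i : nat))%N.
Definition gsum (y : bits n) : C := \sum_(m < n | ~~ y m) w ^+ m.+1.
Definition W (s : nat) (y : bits n) : C :=
  (s`!)%:R * cconj w * (if zeros y == s.+1 then gsum y else 0).

Lemma setbitE (y : bits n) m b i : setbit y m b i = if i == m then b else y i.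
Proof. by rewrite /setbit ffunE. Qed.

Lemma zeros_set (y : bits n) m : ~~ y m -> zeros y = (zeros (setbit y m true)).+1.
Proof.
move=> hm; rewrite /zeros (bigD1 m) //= hm add1n; congr S.
rewrite [RHS](bigD1 m) //= setbitE eqxx /= add0n.
by apply: eq_bigr => i /negbTE hi; rewrite setbitE hi.
Qed.

Lemma zeros0 z : (zeros z == 0)%N = (z == [ffun => true]).
Proof.
rewrite /zeros sum_nat_eq0; apply/forallP/eqP => [h|->].
  apply/ffunP => i; rewrite ffunE; move: (h i) => /=; by case: (z i).
by move=> i; rewrite ffunE.
Qed.

Lemma gsum_set (y : bits n) m : ~~ y m -> gsum y = w ^+ m.+1 + gsum (setbit y m true).
Proof.
move=> hm; rewrite /gsum (bigD1 m) //=; congr (_ + _).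
apply: eq_bigl => i; rewrite setbitE; case: eqP => [->|_] //=.
by rewrite andbF.
by rewrite andbT.
Qed.

Lemma sum_neg_const (y : bits n) (c : C) : \sum_(m < n | ~~ y m) c = c *+ zeros y.
Proof.
rewrite big_mkcond /zeros -sumrMnr; apply: eq_bigr => i _.
by case: (y i).
Qed.

Lemma Psi_formula (y : bits n) : @Psi R n y = W 0 y.
Proof.
rewrite /Psi /W fact0 mul1r; congr (_ * _).
have E : forall m, sigma_minus m (@all_ones R n) y =
    if ~~ y m && (zeros y == 1%N) then 1 else 0.
  move=> m; rewrite /sigma_minus /all_ones.
  case hm: (y m) => //=.
  rewrite (zeros_set (y := y) (m := m)) ?hm // eqSS zeros0.
  by [].
under eq_bigr do rewrite E.
case: (zeros y == 1%N).
  have E' : forall i : 'I_n, w ^+ i.+1 * (if ~~ y i && true then 1 else 0) =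
     if ~~ y i then w ^+ i.+1 else 0.
    by move=> i; case: (y i); rewrite /= ?mulr1 ?mulr0.
  under eq_bigr do rewrite E'.
  by rewrite /gsum [RHS]big_mkcond.
by apply: big1 => i _; rewrite andbF mulr0.
Qed.

Lemma iter_formula s (y : bits n) : iter s (@S_minus R n) (@Psi R n) y = W s y.
Proof.
elim: s y => [|s IH] y; first exact: Psi_formula.
rewrite iterS /S_minus.
under eq_bigr do rewrite /sigma_minus IH.
have E1 : \sum_(m < n) (if y m then 0 else W s (setbit y m true)) =
          \sum_(m < n | ~~ y m) W s (setbit y m true).
  by rewrite [RHS]big_mkcond; apply: eq_bigr => i _; case: (y i).
rewrite E1.
have E2 : forall m, ~~ y m -> W s (setbit y m true) =
   (s`!)%:R * cconj w * (if zeros y == s.+2 then gsum (setbit y m true) else 0).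
  by move=> m hm; rewrite /W (zeros_set hm) eqSS.
rewrite (eq_bigr _ E2) /W.
case hz: (zeros y == s.+2); last first.
  by rewrite [RHS]mulr0; apply: big1 => i _; rewrite mulr0.
rewrite -mulr_sumr.
have E3 : forall m, ~~ y m -> gsum (setbit y m true) = gsum y - w ^+ m.+1.
  by move=> m hm; rewrite (gsum_set hm); ring.
rewrite (eq_bigr _ E3) sumrB sum_neg_const -/(gsum y) (eqP hz).
rewrite mulrS addrC addrK factS natrM.
set a := (s`!)%:R; set k := (s.+1)%:R; set c := cconj w; set g := gsum y.
by rewrite -mulr_natl -/k [k * a]mulrC -!mulrA; congr (_ * _); rewrite mulrCA.
Qed.

End Formula.
Section Rot.
Variable R : realType.
Local Notation C := (R[i]).
Variable n : nat.
Hypothesis hn : (1 < n)%N.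
Local Notation w := (omega R n).
Local Notation gsum := (@gsum R n).
Local Notation W := (@W R n).

Definition rot (y : bits n) : bits n := [ffun j => y (ordS j)].
Definition unrot (y : bits n) : bits n := [ffun j => y (ord_pred j)].

Lemma rot_bij : bijective rot.
Proof.
exists unrot => y; apply/ffunP => j; rewrite !ffunE.
  by rewrite ord_predK.
by rewrite ordSK.
Qed.

Lemma zeros_rot y : zeros (rot y) = zeros y.
Proof.
rewrite /zeros [RHS](reindex (@ordS n)); last exact: onW_bij (ordS_bij n).
by apply: eq_bigr => i _; rewrite ffunE.
Qed.

Lemma gsum_rot y : gsum (rot y) * w = gsum y.
Proof.
rewrite /gsum mulr_suml [RHS](reindex (@ordS n)); last exact: onW_bij (ordS_bij n).
apply: eq_big => [j|j _]; first by rewrite ffunE.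
rewrite /= exprS [w ^+ _.+1]exprS (@omega_pow_mod R n hn) -exprS mulrC.
by rewrite exprS.
Qed.

Lemma cabs2_W_rot s y : cabs2 (W s (rot y)) = cabs2 (W s y).
Proof.
rewrite /W zeros_rot; case: (zeros y == s.+1) => //.
by rewrite !cabs2M -(gsum_rot y) cabs2M (@cabs2_omega R n) mulr1.
Qed.

Definition Q s (i : 'I_n) : R := \sum_(y : bits n) (if y i then 0 else cabs2 (W s y)).

Lemma Q_ordS s i : Q s (ordS i) = Q s i.
Proof.
rewrite /Q [RHS](reindex rot); last exact: onW_bij rot_bij.
by apply: eq_bigr => y _; rewrite ffunE cabs2_W_rot.
Qed.

Definition i0 : 'I_n := Ordinal (ltn_trans (ltn0Sn 0) hn).

Lemma Q_const s i : Q s i = Q s i0.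
Proof.
suff H : forall k (hk : (k < n)%N), Q s (Ordinal hk) = Q s i0.
  by case: i => k hk; exact: H.
elim=> [|k IH] hk; first by congr (Q s _); apply: val_inj.
have hk' : (k < n)%N by apply: ltn_trans hk.
rewrite -(IH hk') -[RHS]Q_ordS; congr (Q s _); apply: val_inj => /=.
by rewrite modn_small.
Qed.

Lemma sumQ s : \sum_(i < n) Q s i = (s.+1)%:R * nsq (W s).
Proof.
rewrite /Q exchange_big /nsq mulr_sumr; apply: eq_bigr => y _.
have -> : \sum_(i < n) (if y i then 0 else cabs2 (W s y)) = cabs2 (W s y) *+ zeros y.
  rewrite /zeros -sumrMnr; apply: eq_bigr => i _; by case: (y i).
rewrite mulr_natl; case hz: (zeros y == s.+1); first by rewrite (eqP hz).
by rewrite /W hz mulr0 cabs20 !mul0rn.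
Qed.

Lemma Q_val s : Q s i0 * n%:R = (s.+1)%:R * nsq (W s).
Proof.
rewrite -sumQ; under eq_bigr do rewrite (Q_const s).
by rewrite sumr_const card_ord mulr_natr.
Qed.

Lemma restr_widen d (hd : (d <= n)%N) (y : bits n) (i : 'I_d) :
  restr d y i = y (widen_ord hd i).
Proof.
rewrite /restr ffunE; case: insubP => [j _ vj|]; last by rewrite (leq_trans (ltn_ord i) hd).
by congr (y _); apply: val_inj.
Qed.

Lemma pb_le d (hd : (d <= n)%N) s : pb d (W s) <= d%:R * Q s i0.
Proof.
have E : \sum_(i < d) Q s (widen_ord hd i) = d%:R * Q s i0.
  under eq_bigr do rewrite (Q_const s).
  by rewrite sumr_const card_ord mulr_natl.
rewrite -E /Q exchange_big /pb; apply: ler_sum => y _.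
have nn : forall i : 'I_d, 0 <= (if y (widen_ord hd i) then 0 else cabs2 (W s y)).
  by move=> i; case: ifP => _ //; exact: cabs2_ge0.
case: ifP => hr; first by apply: sumr_ge0 => i _; exact: nn.
have [i hi] : exists i : 'I_d, ~~ restr d y i.
  apply/existsP; move: hr; apply: contraFT => /existsPn h.
  by apply/eqP/ffunP => i; rewrite [in RHS]ffunE; exact: negbNE (h i).
rewrite (bigD1 i) //= -restr_widen (negbTE hi) lerDl.
by apply: sumr_ge0 => j _; exact: nn.
Qed.

Lemma count_lt m k : (\sum_(i < m) (i < k : nat))%N = minn m k.
Proof.
elim: m => [|m IH]; first by rewrite big_ord0 min0n.
rewrite big_ord_recr /= IH; case: (ltnP m k) => h /=; lia.
Qed.

Definition y0 s : bits n := [ffun j : 'I_n => (s < j)%N].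

Lemma W_y0_neq0 s : (s.+1 < n)%N -> W s (y0 s) != 0.
Proof.
move=> hs.
have hz : zeros (y0 s) = s.+1.
  rewrite /zeros.
  have -> : (\sum_(i < n) (~~ y0 s i : nat))%N = (\sum_(i < n) (i < s.+1 : nat))%N.
    by apply: eq_bigr => i _; rewrite ffunE ltnNge negbK ltnS.
  rewrite count_lt; lia.
have hg' : gsum (y0 s) = \sum_(i < s.+1) w ^+ i.+1.
  rewrite [RHS](big_ord_widen_cond n xpredT (fun i => w ^+ i.+1) (ltnW hs)).
  by apply: eq_bigl => i; rewrite ffunE /= ltnNge negbK ltnS.
have hg : gsum (y0 s) = w * \sum_(i < s.+1) w ^+ i.
  by rewrite hg' mulr_sumr; apply: eq_bigr => i _; rewrite exprS.
rewrite /W hz eqxx hg !mulf_neq0 //.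
- by rewrite -cabs2_eq0 cabs2_conj (@cabs2_omega R n) oner_neq0.
- exact: (@omega_neq0 R n).
- by apply: (@geom_neq0 R n hn); lia.
Qed.

Lemma nsq_W_pos s : (s.+1 < n)%N -> 0 < nsq (W s).
Proof.
move=> hs; rewrite /nsq (bigD1 (y0 s)) //=.
apply: lt_le_trans (_ : 0 < cabs2 (W s (y0 s))) _.
  by rewrite lt0r cabs2_eq0 W_y0_neq0 // cabs2_ge0.
by rewrite lerDl; apply: sumr_ge0 => y _; exact: cabs2_ge0.
Qed.

End Rot.
Section PsiSec.
Variable R : realType.
Local Notation C := (R[i]).
Variable n : nat.
Hypothesis hn : (1 < n)%N.
Variable s : nat.
Hypothesis hs : (s.+1 < n)%N.

Local Notation v := (iter s (@S_minus R n) (@Psi R n)).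

Lemma nsq_v : nsq (n:=n) v = nsq (@W R n s).
Proof. by apply: eq_bigr => y _; rewrite iter_formula. Qed.

Lemma pb_v d : pb (n:=n) d v = pb d (@W R n s).
Proof. by apply: eq_bigr => y _; rewrite iter_formula. Qed.

Lemma nsq_v_pos : 0 < nsq (n:=n) v.
Proof. by rewrite nsq_v; exact: nsq_W_pos. Qed.

Lemma cabs2_psi y : cabs2 (@psi R n s y) = cabs2 (v y : C) / nsq (n:=n) v.
Proof.
rewrite /psi /vscale cabs2M /cabs2 /= expr0n /= addr0 -/(cabs2 (v y : C)).
rewrite exprVn vnorm_sqr mulrC.
by [].
Qed.

Lemma psi_nsq : nsq (@psi R n s) = 1.
Proof.
rewrite /nsq; under eq_bigr do rewrite cabs2_psi.
rewrite -mulr_suml -/(nsq (n:=n) v) divff //; exact: lt0r_neq0 nsq_v_pos.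
Qed.

Lemma psi_pb d (hd : (d <= n)%N) : pb d (@psi R n s) <= (d * s.+1)%:R / n%:R.
Proof.
have E : pb d (@psi R n s) = pb (n:=n) d v / nsq (n:=n) v.
  rewrite /pb mulr_suml; apply: eq_bigr => y _; rewrite cabs2_psi.
  by case: ifP => _ //; rewrite mul0r.
rewrite E ler_pdivrMr ?nsq_v_pos // pb_v nsq_v.
apply: le_trans (@pb_le R n hn d hd s) _.
have hQ := @Q_val R n hn s.
have n0 : 0 < n%:R :> R by rewrite ltr0n (ltn_trans _ hn).
have -> : @Q R n s (i0 hn) = (s.+1)%:R * nsq (@W R n s) / n%:R.
  by rewrite -hQ mulfK // lt0r_neq0.
rewrite natrM [X in _ <= X](_ : _ = d%:R * ((s.+1)%:R * nsq (@W R n s) / n%:R)) //.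
by field; exact: lt0r_neq0.
Qed.

End PsiSec.

Lemma key_bound (R : realType) n d (F : qop R d) t :
  (1 < n)%N -> (t.+1 < n)%N -> (d <= n)%N -> op_norm_le1 F ->
  cmod (expect (@tensor_id R n d F) (@psi R n t) - F (ones d) (ones d))
    <= 3%:R * Num.sqrt ((d * t.+1)%:R / n%:R).
Proof.
move=> hn ht hd hF.
have := partA hd (@psi R n t) hF.
rewrite psi_nsq // mulr1 sqrtr1 mulr1 => h; apply: le_trans h _.
by rewrite ler_wpM2l // ler_sqrt ?psi_pb // divr_ge0.
Qed.
Local Close Scope complex_scope.

Theorem theorem7 (R : realType) :
  exists (K : R) (N : nat), 0 < K /\
    forall (n d : nat) (F : qop R d) (s0 r s : nat),
      (N <= n)%N -> (d <= n)%N ->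
      op_norm_le1 F ->
      (s0 <= n - 2)%N -> (r <= s0)%N -> (s <= s0)%N ->
      cmod (expect (@tensor_id R n d F) (@psi R n s) - expect (@tensor_id R n d F) (@psi R n r))
        <= K * Num.sqrt ((d * s0)%:R / n%:R).
Proof.
exists 12%:R, 2%N; split; first by rewrite ltr0n.
move=> n d F s0 r s hN hd hF hs0 hr hs.
have hn : (1 < n)%N by [].
have n0 : 0 < n%:R :> R by rewrite ltr0n (ltn_trans _ hn).
case: (posnP s0) => [s00|s0pos].
  have -> : s = 0%N by lia.
  have -> : r = 0%N by lia.
  rewrite subrr /cmod cabs20 sqrtr0 mulr_ge0 // ?sqrtr_ge0 //.
set x := Num.sqrt ((d * s0)%:R / n%:R : R).
have key : forall t, (t <= s0)%N ->
    cmod (expect (@tensor_id R n d F) (@psi R n t) - F (ones d) (ones d)) <= 6%:R * x.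
  move=> t ht.
  have ht' : (t.+1 < n)%N by lia.
  apply: le_trans (key_bound hn ht' hd hF) _.
  have -> : 6%:R * x = 3%:R * (2%:R * x) :> R by rewrite mulrA -natrM.
  rewrite ler_wpM2l //.
  have -> : 2%:R * x = Num.sqrt (4%:R * ((d * s0)%:R / n%:R)).
    rewrite sqrtrM // (_ : 4%:R = 2%:R ^+ 2 :> R); last by rewrite -natrX.
    by rewrite sqrtr_sqr ger0_norm.
  rewrite ler_sqrt; last by rewrite mulr_ge0 // divr_ge0.
  rewrite mulrA -natrM ler_pM2r ?invr_gt0 // ler_nat.
  have : (t.+1 <= 4 * s0)%N by lia.
  move=> h; rewrite mulnA [(4 * d)%N]mulnC -mulnA leq_mul2l h orbT //.
have E : expect (@tensor_id R n d F) (@psi R n s) - expect (@tensor_id R n d F) (@psi R n r) =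
   (expect (@tensor_id R n d F) (@psi R n s) - F (ones d) (ones d)) -
   (expect (@tensor_id R n d F) (@psi R n r) - F (ones d) (ones d)).
  by rewrite opprB addrA subrK.
rewrite E; apply: le_trans (cmodB _ _) _.
have -> : 12%:R * x = 6%:R * x + 6%:R * x :> R by rewrite -mulrDl -natrD.
by apply: lerD; apply: key.
Qed.
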